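(* Let $A$ be a basic connected finite dimensional algebra over an algebraically closed field $k$ with ordinary quiver $Q$ without oriented cycles, and let $\nu\colon kQ\twoheadrightarrow A$ be a presentation. Then $\mathsf{Im}(\theta_\nu)\subseteq\mathsf{HH}^1(A)$ is diagonalizable.
   Context: Fix a complete set $e_1,\dots,e_n$ of primitive orthogonal idempotents of $A$ indexed by $Q_0=\{1,\dots,n\}$, $E=\bigoplus ke_i$, $\mathfrak r$ the radical. A presentation is a surjective algebra map $\nu\colon kQ\twoheadrightarrow A$ with admissible kernel ($(kQ^+)^N\subseteq\mathsf{Ker}\,\nu\subseteq(kQ^+)^2$ for some $N\ge2$, $kQ^+$ the arrow ideal) and $\nu(e_i)=e_i$. $\mathsf{HH}^1(A)=Der_0(A)/Int_0(A)$, with $Der_0(A)$ the derivations vanishing on all $e_i$ (commutator bracket) and $Int_0(A)=\{a\mapsto ea-ae\mid e\in E\}$. Walks: paths in $Q$ with formal inverse arrows allowed. For $I=\mathsf{Ker}\,\nu$, the homotopy relation $\sim_I$ is the smallest equivalence relation on walks with $\alpha\alpha^{-1}\sim_I e_y$, $\alpha^{-1}\alpha\sim_I e_x$ for arrows $\alpha\colon x\to y$, compatible with concatenation, and identifying two paths occurring with nonzero coefficient in a same minimal relation of $I$ (a nonzero $\sum t_iu_i\in I$, $t_i\neq0$, distinct paths $u_i$, no nonempty proper subsum in $I$). $\pi_1(Q,I)$ is the group of classes of closed walks at a fixed vertex $x_0$. Fix a maximal tree $T$ of $Q$, $\gamma_x$ the minimal walk in $T$ from $x_0$ to $x$. For a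 group homomorphism $f\colon\pi_1(Q,I)\to k^+$, $\theta_\nu(f)$ is the class of the derivation $\tilde f$ with $\tilde f(\nu(u))=f([\gamma_y^{-1}u\gamma_x]_I)\nu(u)$ for paths $u$ from $x$ to $y$; $\theta_\nu\colon\mathsf{Hom}(\pi_1(Q,I),k^+)\to\mathsf{HH}^1(A)$. A basis of $A$ is a $k$-basis $\mathcal B\subseteq\bigcup_{i,j}e_jAe_i$ containing $e_1,\dots,e_n$ with the other elements in $\mathfrak r$. A subset $D\subseteq\mathsf{HH}^1(A)$ is diagonalizable if there is a basis $\mathcal B$ of $A$ such that each $f\in D$ is represented by a derivation diagonal with respect to $\mathcal B$. *)

(* Defs.v *)
From Stdlib Require Import Relations.
From HB Require Import structures.
From mathcomp Require Import all_boot all_order all_algebra.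
From mathcomp Require Import falgebra.
Set Implicit Arguments. Unset Strict Implicit. Unset Printing Implicit Defensive.
Import GRing.Theory.
Local Open Scope ring_scope.

Section Quiver.
Variables (n : nat) (Arr : finType) (s t : Arr -> 'I_n).

(* A path is given by its source vertex and its list of arrows in the order
   in which they are traversed; the trivial path e_x is (x, [::]). *)
Definition qpath := ('I_n * seq Arr)%type.

Fixpoint arrows_valid (x : 'I_n) (w : seq Arr) : bool :=
  if w is a :: w' then (s a == x) && arrows_valid (t a) w' else true.
Fixpoint arrows_end (x : 'I_n) (w : seq Arr) : 'I_n :=
  if w is a :: w' then arrows_end (t a) w' else x.

Definition path_valid (p : qpath) := arrows_valid p.1 p.2.
Definition path_src (p : qpath) := p.1.
Definition path_tgt (p : qpath) := arrows_end p.1 p.2.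

Definition acyclic_quiver : Prop :=
  forall p : qpath, path_valid p -> path_tgt p = path_src p -> p.2 = [::].

(* Walks: letters are (a, true) = arrow a, (a, false) = formal inverse a^-1.
   A walk is a start vertex together with its letters in traversal order. *)
Definition letter := (Arr * bool)%type.
Definition lsrc (l : letter) := if l.2 then s l.1 else t l.1.
Definition ltgt (l : letter) := if l.2 then t l.1 else s l.1.
Definition linv (l : letter) : letter := (l.1, ~~ l.2).

Fixpoint wvalid (x : 'I_n) (w : seq letter) : bool :=
  if w is l :: w' then (lsrc l == x) && wvalid (ltgt l) w' else true.
Fixpoint wend (x : 'I_n) (w : seq letter) : 'I_n :=
  if w is l :: w' then wend (ltgt l) w' else x.

Definition winv (w : seq letter) : seq letter := rev (map linv w).
Definition fwd (w : seq Arr) : seq letter := map (fun a => (a, true)) w.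

Fixpoint wreduced (w : seq letter) : bool :=
  match w with
  | l :: ((l' :: _) as w') => (l' != linv l) && wreduced w'
  | _ => true
  end.

(* maximal tree T (Q being connected, i.e. a spanning tree): every vertex is
   reached from x0 by a walk in T, and T contains no cycle, i.e. no nonempty
   reduced closed walk using only arrows of T. *)
Definition walk_in (T : {set Arr}) (w : seq letter) := all (fun l => l.1 \in T) w.

Definition maximal_tree (x0 : 'I_n) (T : {set Arr}) : Prop :=
  (forall x : 'I_n, exists w, [/\ wvalid x0 w, wend x0 w = x & walk_in T w]) /\
  (forall x w, wvalid x w -> wend x w = x -> walk_in T w -> wreduced w -> w = [::]).

(* gamma x is the minimal (= reduced) walk in T from x0 to x *)
Definition tree_walks (x0 : 'I_n) (T : {set Arr}) (gamma : 'I_n -> seq letter) :=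
  forall x, [/\ wvalid x0 (gamma x), wend x0 (gamma x) = x,
                walk_in T (gamma x) & wreduced (gamma x)].

Variables (k : fieldType) (A : falgType k).
Variables (e : 'I_n -> A) (a : Arr -> A).

(* nu on the path (x, [a1; ...; am]) is a_m * ... * a_1 (* e_x *) *)
Definition nu_path (p : qpath) : A := foldl (fun acc b => a b * acc) (e p.1) p.2.

Definition nu_comb (r : seq (k * qpath)) : A := \sum_(c <- r) c.1 *: nu_path c.2.

Definition comb_ok (r : seq (k * qpath)) :=
  all (fun c => path_valid c.2) r && uniq (map snd r).

(* The data (e, a) defines an algebra map nu : kQ -> A with nu(e_i) = e_i,
   nu(alpha) = a alpha; it is surjective, with admissible kernel. *)
Definition presentation : Prop :=
  [/\ (* nu is an algebra map: relations of kQ *)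
      [/\ (forall i j, e i * e j = if i == j then e i else 0),
           \sum_i e i = 1 &
           (forall b, e (t b) * a b * e (s b) = a b)],
      (forall x : A, exists r, comb_ok r /\ x = nu_comb r),
      (* (kQ^+)^N \subseteq Ker nu for some N >= 2 *)
      (exists2 N, (2 <= N)%N & forall p, path_valid p -> (N <= size p.2)%N -> nu_path p = 0) &
      (* Ker nu \subseteq (kQ^+)^2 *)
      (forall r, comb_ok r -> nu_comb r = 0 ->
         forall c, c \in r -> (size c.2.2 < 2)%N -> c.1 = 0)].

Definition minimal_relation (r : seq (k * qpath)) : Prop :=
  [/\ r <> [::], comb_ok r, all (fun c => c.1 != 0) r, nu_comb r = 0 &
      forall m : bitseq, size m = size r -> mask m r <> [::] -> mask m r <> r ->
        nu_comb (mask m r) <> 0].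

Inductive hstep : ('I_n * seq letter) -> ('I_n * seq letter) -> Prop :=
  | hstep_cancel x p l q :
      wvalid x (p ++ [:: l; linv l] ++ q) ->
      hstep (x, p ++ [:: l; linv l] ++ q) (x, p ++ q)
  | hstep_rel x p q r u v :
      minimal_relation r -> u \in map snd r -> v \in map snd r ->
      wvalid x (p ++ fwd u.2 ++ q) -> wvalid x (p ++ fwd v.2 ++ q) ->
      hstep (x, p ++ fwd u.2 ++ q) (x, p ++ fwd v.2 ++ q).

Definition homotopic := clos_refl_sym_trans _ hstep.

(* group homomorphisms pi_1(Q, I) -> k^+ at x0, viewed as functions on closed
   walks at x0 that are constant on ~_I-classes and additive *)
Definition pi1_hom (x0 : 'I_n) (f : seq letter -> k) : Prop :=
  (forall w w', wvalid x0 w -> wend x0 w = x0 -> wvalid x0 w' -> wend x0 w' = x0 ->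
      homotopic (x0, w) (x0, w') -> f w = f w') /\
  (forall w w', wvalid x0 w -> wend x0 w = x0 -> wvalid x0 w' -> wend x0 w' = x0 ->
      f (w ++ w') = f w + f w').

(* tf is the derivation \tilde f : tf(nu(u)) = f([gamma_y^-1 u gamma_x]) nu(u)
   (walks are written in traversal order: first gamma_x, then u, then gamma_y^-1) *)
Definition tilde_of (gamma : 'I_n -> seq letter) (f : seq letter -> k) (tf : A -> A) :=
  forall p : qpath, path_valid p ->
    tf (nu_path p) = f (gamma (path_src p) ++ fwd p.2 ++ winv (gamma (path_tgt p))) *: nu_path p.

End Quiver.

Section AlgebraSide.
Variables (k : fieldType) (A : falgType k) (n : nat) (e : 'I_n -> A).

Definition is_linear_map (D : A -> A) : Prop :=
  forall (c : k) (x y : A), D (c *: x + y) = c *: D x + D y.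

Definition der0 (D : A -> A) : Prop :=
  [/\ is_linear_map D, (forall x y, D (x * y) = D x * y + x * D y) &
      forall i, D (e i) = 0].

Definition int0 (D : A -> A) : Prop :=
  exists c : 'I_n -> k, let eps := \sum_i c i *: e i in
    forall x, D x = eps * x - x * eps.

Definition in_radical (x : A) : Prop := forall y : A, (1 - y * x) \is a GRing.unit.

Definition adapted_basis (B : seq A) : Prop :=
  [/\ basis_of fullv B,
      (forall b, b \in B -> exists i j, e j * b * e i = b),
      (forall i, e i \in B) &
      (forall b, b \in B -> (forall i, b != e i) -> in_radical b)].

Definition diagonal_wrt (B : seq A) (D : A -> A) : Prop :=
  forall b, b \in B -> exists c : k, D b = c *: b.

End AlgebraSide.

(* Main.v *)
Require Import Defs.
From HB Require Import structures.
From mathcomp Require Import all_boot all_order all_algebra.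
From mathcomp Require Import falgebra.
From Stdlib Require Import Relations.
Set Implicit Arguments. Unset Strict Implicit. Unset Printing Implicit Defensive.
Import GRing.Theory.
Local Open Scope ring_scope.

Section Walks.
Variables (n : nat) (Arr : finType) (s t : Arr -> 'I_n).
Variables (k : fieldType) (A : falgType k) (e : 'I_n -> A) (a : Arr -> A).

Lemma wvalid_cat x u v : wvalid s t x (u ++ v) = wvalid s t x u && wvalid s t (wend s t x u) v.
Proof. by elim: u x => [|l u IH] x //=; rewrite IH andbA. Qed.

Lemma wend_cat x u v : wend s t x (u ++ v) = wend s t (wend s t x u) v.
Proof. by elim: u x => [|l u IH] x //=. Qed.

Lemma winv_rcons (w : seq (letter Arr)) (l : letter Arr) : winv (rcons w l) = linv l :: winv w.
Proof. by rewrite /winv map_rcons rev_rcons. Qed.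

Lemma winvK (w : seq (letter Arr)) : winv (winv w) = w.
Proof. by rewrite /winv map_rev revK -map_comp map_id_in // => -[b c] _; rewrite /linv /= negbK. Qed.

Lemma winv_valid x w : wvalid s t x w -> wvalid s t (wend s t x w) (winv w) /\ wend s t (wend s t x w) (winv w) = x.
Proof.
elim/last_ind: w => [|w l IH] //=.
rewrite -cats1 wvalid_cat wend_cat /= andbT => /andP[vw /eqP hl].
rewrite cats1 winv_rcons /= /linv /= /lsrc /ltgt /= in hl *.
have [IH1 IH2] := IH vw.
by case: (l.2) hl => /= ->; rewrite eqxx IH1 IH2.
Qed.

Lemma cancel_homotopic x p g q :
  wvalid s t x (p ++ g ++ winv g ++ q) ->
  homotopic s t e a (x, p ++ g ++ winv g ++ q) (x, p ++ q).
Proof.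
elim/last_ind: g p q => [|g l IH] p q /=.
  by move=> _; apply: rst_refl.
rewrite winv_rcons => hv.
have E : p ++ rcons g l ++ linv l :: winv g ++ q = (p ++ g) ++ [:: l; linv l] ++ (winv g ++ q).
  by rewrite -cats1 -!catA.
rewrite E in hv *.
eapply rst_trans; first by apply: rst_step; apply: hstep_cancel hv.
rewrite -catA; apply: IH.
move: hv; rewrite !wvalid_cat !wend_cat /=.
have -> : ltgt s t (linv l) = lsrc s t l by rewrite /ltgt /lsrc /linv /=; case: (l.2).
by case/and4P => /andP[-> ->] /and3P[/eqP -> _ _] -> ->.
Qed.


Lemma fwd_valid x w : wvalid s t x (fwd w) = arrows_valid s t x w.
Proof. by elim: w x => [|b w IH] x //=; rewrite IH. Qed.
Lemma fwd_end x w : wend s t x (fwd w) = arrows_end t x w.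
Proof. by elim: w x => [|b w IH] x //=; rewrite IH. Qed.
Lemma fwd_cat (u v : seq Arr) : fwd (u ++ v) = fwd u ++ fwd v.
Proof. by rewrite /fwd map_cat. Qed.
Lemma arrows_valid_cat x u v : arrows_valid s t x (u ++ v) = arrows_valid s t x u && arrows_valid s t (arrows_end t x u) v.
Proof. by elim: u x => [|b u IH] x //=; rewrite IH andbA. Qed.
Lemma arrows_end_cat x u v : arrows_end t x (u ++ v) = arrows_end t (arrows_end t x u) v.
Proof. by elim: u x => [|b u IH] x //=. Qed.

Section F.
Variables (x0 : 'I_n) (gamma : 'I_n -> seq (letter Arr)) (f : seq (letter Arr) -> k).
Hypothesis (hf : pi1_hom s t e a x0 f).
Hypothesis (hg : forall x, wvalid s t x0 (gamma x) /\ wend s t x0 (gamma x) = x).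

Lemma f_nil : f [::] = 0.
Proof.
have /= H := hf.2 [::] [::] erefl erefl erefl erefl.
by apply: (@addrI _ (f [::])); rewrite addr0 -H.
Qed.

Definition G (p : qpath n Arr) := gamma (path_src p) ++ fwd p.2 ++ winv (gamma (path_tgt t p)).

Lemma G_closed p : path_valid s t p -> wvalid s t x0 (G p) /\ wend s t x0 (G p) = x0.
Proof.
move=> pv; rewrite /G !wvalid_cat !wend_cat.
have [g1 g2] := hg (path_src p); have [g3 g4] := hg (path_tgt t p).
have [w1 w2] := winv_valid g3; rewrite g4 in w1 w2.
have pv' : arrows_valid s t (path_src p) p.2 := pv.
rewrite g1 g2 fwd_valid fwd_end pv' /=.
change (arrows_end t (path_src p) p.2) with (path_tgt t p).
by rewrite w1 w2.
Qed.

Lemma f_loop x : f (gamma x ++ winv (gamma x)) = 0.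
Proof.
have [g1 g2] := hg x; have [w1 w2] := winv_valid g1; rewrite g2 in w1 w2.
have V : wvalid s t x0 ([::] ++ gamma x ++ winv (gamma x) ++ [::]).
  by rewrite cats0 /= wvalid_cat g1 g2 w1.
have H := cancel_homotopic V.
rewrite cats0 /= in H V.
rewrite -f_nil; apply: hf.1 => //.
by rewrite wend_cat g2 w2.
Qed.

Lemma f_G_cat p q : path_valid s t p -> path_valid s t q -> path_src p = path_tgt t q ->
  f (G (q.1, q.2 ++ p.2)) = f (G q) + f (G p).
Proof.
move=> pv qv E.
have [Gp1 Gp2] := G_closed pv; have [Gq1 Gq2] := G_closed qv.
rewrite -hf.2 //.
have [g1 g2] := hg (path_tgt t q).
set gy := gamma (path_tgt t q).
have E1 : G q ++ G p = (gamma (path_src q) ++ fwd q.2) ++ winv gy ++ winv (winv gy) ++ (fwd p.2 ++ winv (gamma (path_tgt t p))).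
  by rewrite winvK /G E -!catA.
have E2 : G (q.1, q.2 ++ p.2) = (gamma (path_src q) ++ fwd q.2) ++ (fwd p.2 ++ winv (gamma (path_tgt t p))).
  have Et : path_tgt t (q.1, q.2 ++ p.2) = path_tgt t p.
    by rewrite /path_tgt /= arrows_end_cat -[arrows_end t q.1 q.2]/(path_tgt t q) -E.
  by rewrite /G Et fwd_cat -!catA.
have V : wvalid s t x0 (G q ++ G p) by rewrite wvalid_cat Gq1 Gq2 Gp1.
have V' := V; rewrite E1 in V'.
have H := cancel_homotopic V'.
rewrite -E1 -E2 in H.
have [Gr1 Gr2] : wvalid s t x0 (G (q.1, q.2 ++ p.2)) /\ wend s t x0 (G (q.1, q.2 ++ p.2)) = x0.
  apply: G_closed; rewrite /path_valid /= arrows_valid_cat.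
  by rewrite -[arrows_end t q.1 q.2]/(path_tgt t q) -E; apply/andP; split.
apply: hf.1 => //; last exact: rst_sym H.
by rewrite wend_cat Gq2 Gp2.
Qed.
End F.

Section Alg.
Hypothesis eO : forall i j, e i * e j = if i == j then e i else 0.
Hypothesis ea : forall b, e (t b) * a b * e (s b) = a b.

Local Notation nu := (nu_path e a).
Definition M (w : seq Arr) := foldl (fun acc b => a b * acc) 1 w.

Lemma foldlM c w : foldl (fun acc b => a b * acc) c w = M w * c.
Proof.
rewrite /M; elim: w c => [|b w IH] c /=; first by rewrite mul1r.
by rewrite IH (IH (a b * 1)) mulr1 mulrA.
Qed.

Lemma nuE p : nu p = M p.2 * e p.1.
Proof. by rewrite /nu_path foldlM. Qed.

Lemma eid i : e i * e i = e i.
Proof. by rewrite eO eqxx. Qed.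

Lemma nu_r p : nu p * e (path_src p) = nu p.
Proof. by rewrite nuE -mulrA eid. Qed.

Lemma nu_l p : path_valid s t p -> e (path_tgt t p) * nu p = nu p.
Proof.
case: p => x w; rewrite /path_valid /path_tgt /=.
elim: w x => [|b w IH] x /=; first by rewrite nuE /= mul1r eid.
move=> /andP[/eqP sb vw].
have := IH _ vw; rewrite !nuE /= => H.
have -> : M (b :: w) = M w * a b by rewrite /M /= -foldlM mulr1.
have -> : a b = e (t b) * (a b * e (s b)) by rewrite mulrA ea.
have H' : e (arrows_end t (t b) w) * M w * e (t b) = M w * e (t b) by rewrite -mulrA H.
by rewrite !mulrA H'.
Qed.

Lemma nu_mul p q : path_valid s t p -> path_valid s t q ->
  nu p * nu q = if path_src p == path_tgt t q then nu (q.1, q.2 ++ p.2) else 0.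
Proof.
move=> pv qv.
rewrite -nu_r -(nu_l qv) -mulrA (mulrA (e _)) eO.
case: eqP => [E|]; last by rewrite mul0r mulr0.
rewrite E [nu (_, _)]/nu_path /= foldl_cat -/(nu_path e a q) foldlM (nuE p).
change (M p.2 * e (path_src p) * (e (path_tgt t q) * nu q) = M p.2 * nu q).
by rewrite E (nu_l qv) -mulrA (nu_l qv).
Qed.

Lemma valid_cat p q : path_valid s t p -> path_valid s t q -> path_src p = path_tgt t q ->
  path_valid s t (q.1, q.2 ++ p.2).
Proof.
move=> pv qv E; rewrite /path_valid /= arrows_valid_cat.
by rewrite -[arrows_end t q.1 q.2]/(path_tgt t q) -E; apply/andP; split.
Qed.

Section Der.
Variables (x0 : 'I_n) (gamma : 'I_n -> seq (letter Arr)) (f : seq (letter Arr) -> k) (tf : A -> A).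
Hypothesis (hf : pi1_hom s t e a x0 f).
Hypothesis (hg : forall x, wvalid s t x0 (gamma x) /\ wend s t x0 (gamma x) = x).
Hypothesis (tflin : is_linear_map tf) (tft : tilde_of s t e a gamma f tf).

Lemma tf0 : tf 0 = 0.
Proof.
have := tflin 1 0 0; rewrite !scale1r addr0 => H.
by apply: (@addrI _ (tf 0)); rewrite addr0 -H.
Qed.
Lemma tfD x y : tf (x + y) = tf x + tf y.
Proof. by have := tflin 1 x y; rewrite !scale1r. Qed.
Lemma tfZ c x : tf (c *: x) = c *: tf x.
Proof. by have := tflin c x 0; rewrite !addr0 tf0 addr0. Qed.

Definition Pd x y := tf (x * y) = tf x * y + x * tf y.

Lemma Pd_gen p q : path_valid s t p -> path_valid s t q -> Pd (nu p) (nu q).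
Proof.
move=> pv qv; rewrite /Pd !tft // -scalerAl -scalerAr -scalerDl nu_mul //.
case: eqP => E; last by rewrite tf0 scaler0.
by rewrite tft ?valid_cat // (f_G_cat hf hg) // addrC.
Qed.

Lemma Pd_l r y : (forall c, c \in r -> Pd (nu c.2) y) -> Pd (nu_comb e a r) y.
Proof.
rewrite /nu_comb; elim: r => [|c r IH] H.
  by rewrite /Pd big_nil mul0r tf0 mul0r mul0r addr0.
rewrite big_cons /Pd mulrDl tfD -scalerAl !tfZ.
have -> := H c (mem_head _ _).
rewrite IH; last by move=> c' hc'; apply: H; rewrite inE hc' orbT.
by rewrite tfD tfZ scalerDr !mulrDl -!scalerAl addrACA.
Qed.

Lemma Pd_r r x : (forall c, c \in r -> Pd x (nu c.2)) -> Pd x (nu_comb e a r).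
Proof.
rewrite /nu_comb; elim: r => [|c r IH] H.
  by rewrite /Pd big_nil !mulr0 tf0 mulr0 addr0.
rewrite big_cons /Pd mulrDr tfD -scalerAr !tfZ.
have -> := H c (mem_head _ _).
rewrite IH; last by move=> c' hc'; apply: H; rewrite inE hc' orbT.
by rewrite tfD tfZ scalerDr !mulrDr -!scalerAr addrACA.
Qed.

End Der.

Section Nil.
Variable N : nat.
Hypothesis hN : forall p, path_valid s t p -> (N <= size p.2)%N -> nu p = 0.

Inductive inJ (m : nat) : A -> Prop :=
| J0 : inJ m 0
| JS c p z : path_valid s t p -> (m <= size p.2)%N -> inJ m z -> inJ m (c *: nu p + z).

Lemma inJ_mono m1 m2 u : (m1 <= m2)%N -> inJ m2 u -> inJ m1 u.
Proof.
move=> le; elim=> [|c p z pv hs _ IH]; first exact: J0.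
by apply: JS => //; apply: leq_trans hs.
Qed.

Lemma inJ_add m u v : inJ m u -> inJ m v -> inJ m (u + v).
Proof.
elim=> [|c p z pv hs _ IH] hv; first by rewrite add0r.
by rewrite -addrA; apply: JS => //; apply: IH.
Qed.

Lemma inJ_scale m d u : inJ m u -> inJ m (d *: u).
Proof.
elim=> [|c p z pv hs _ IH]; first by rewrite scaler0; exact: J0.
by rewrite scalerDr scalerA; apply: JS.
Qed.

Lemma inJ_mul_gen p m z : path_valid s t p -> inJ m z -> inJ (m + size p.2) (nu p * z).
Proof.
move=> pv; elim=> [|c q z0 qv hs _ IH]; first by rewrite mulr0; exact: J0.
rewrite mulrDr -scalerAr nu_mul //; case: eqP => E; last by rewrite scaler0 add0r.
apply: JS => //; first exact: valid_cat.
by rewrite /= size_cat leq_add2r.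
Qed.

Lemma inJ_mul m m' u v : inJ m u -> inJ m' v -> inJ (m + m') (u * v).
Proof.
move=> hu hv; elim: hu => [|c p z pv hs _ IH]; first by rewrite mul0r; exact: J0.
rewrite mulrDl -scalerAl; apply: inJ_add => //; apply: inJ_scale.
apply: inJ_mono (inJ_mul_gen pv hv).
by rewrite addnC leq_add2l.
Qed.

Lemma inJ_N u : inJ N u -> u = 0.
Proof. by elim=> [|c p z pv hs _ ->] //; rewrite hN // scaler0 addr0. Qed.

Lemma comb_inJ0 r : all (fun c => path_valid s t c.2) r -> inJ 0 (nu_comb e a r).
Proof.
rewrite /nu_comb; elim: r => [|c r IH] /=; first by rewrite big_nil => _; exact: J0.
by case/andP => cv rv; rewrite big_cons; apply: JS => //; apply: IH.
Qed.

Lemma nil_unit (x : A) : x ^+ N = 0 -> (1 - x) \is a GRing.unit.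
Proof.
move=> xN; apply/unitrP; exists (\sum_(i < N) x ^+ i).
have H : (1 - x) * (\sum_(i < N) x ^+ i) = 1.
  by rewrite -opprB mulNr -subrX1 xN sub0r opprK.
split => //.
have C : GRing.comm (1 - x) (\sum_(i < N) x ^+ i).
  apply: commr_sum => i _; apply: commrX; apply: commr_sym.
  by apply: commrB; [apply: commr1 | apply: commr_refl].
by rewrite -C.
Qed.

Hypothesis surj : forall x : A, exists r, comb_ok s t r /\ x = nu_comb e a r.

Lemma comb_valid (r : seq (k * qpath n Arr)) : comb_ok s t r -> all (fun c => path_valid s t c.2) r.
Proof. by case/andP. Qed.

Lemma rad_path p : path_valid s t p -> (1 <= size p.2)%N -> in_radical (nu p).
Proof.
move=> pv hs y; apply: nil_unit.
have [r [ro ->]] := surj y.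
have Hx : inJ 1 (nu_comb e a r * nu p).
  apply: (@inJ_mul 0 1) ; first exact: comb_inJ0 (comb_valid ro).
  by rewrite -[nu p]addr0 -[nu p]scale1r; apply: JS => //; exact: J0.
have [r1 [ro1 E1]] := surj 1.
have P : forall j, inJ j ((nu_comb e a r * nu p) ^+ j).
  elim=> [|j IH]; first by rewrite expr0 E1; exact: comb_inJ0 (comb_valid ro1).
  by rewrite exprS; apply: (@inJ_mul 1 j).
exact: inJ_N (P N).
Qed.
End Nil.

End Alg.
End Walks.

Lemma greedy (K : fieldType) (V : vectType K) (Y X : seq V) : free X ->
  exists B : seq V, [/\ free B, {subset X <= B}, {subset B <= X ++ Y} &
                        {subset Y <= <<B>>%VS}].
Proof.
elim: Y X => [|y Y IH] X fX.
  by exists X; split => //; rewrite cats0.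
case hy: (y \in <<X>>%VS).
  have [B [fB sXB sBX sYB]] := IH X fX.
  exists B; split => //.
  - by move=> b /sBX; rewrite !mem_cat inE => /orP[->|->] //; rewrite !orbT.
  - move=> z; rewrite inE => /orP[/eqP ->|]; last exact: sYB.
    by apply: (subvP (sub_span sXB)).
have fyX : free (y :: X) by rewrite free_cons hy fX.
have [B [fB sXB sBX sYB]] := IH _ fyX.
exists B; split => //.
- by move=> b hb; apply: sXB; rewrite inE hb orbT.
- move=> b /sBX; rewrite !mem_cat !inE; case/orP => [/orP[->|->]|->]; rewrite ?orbT //.
- move=> z; rewrite inE => /orP[/eqP ->|]; last exact: sYB.
  by apply: memv_span; apply: sXB; exact: mem_head.
Qed.

Section Final.
Variables (n : nat) (Arr : finType) (s t : Arr -> 'I_n).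
Variables (k : fieldType) (A : falgType k) (e : 'I_n -> A) (a : Arr -> A).
Local Notation nu := (nu_path e a).
Hypothesis eO : forall i j, e i * e j = if i == j then e i else 0.
Hypothesis enz : forall i, e i != 0.

Lemma free_e (sq : seq 'I_n) : uniq sq -> free (map e sq).
Proof.
elim: sq => [|i sq IH] /=; first by rewrite nil_free.
case/andP => isq usq; rewrite free_cons IH // andbT.
apply/negP => H.
have S : (<<map e sq>> <= lker (amull (e i)))%VS.
  apply/span_subvP => x /mapP[j hj ->]; rewrite memv_ker lfunE /= eO.
  by case: (i =P j) => [E|_]; [rewrite E hj in isq | rewrite eqxx].
have := subvP S _ H; rewrite memv_ker lfunE /= eO eqxx.
by rewrite (negbTE (enz i)).
Qed.

Hypothesis surj : forall x : A, exists r, comb_ok s t r /\ x = nu_comb e a r.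

Lemma comb_span (r : seq (k * qpath n Arr)) : nu_comb e a r \in <<map nu (map snd r)>>%VS.
Proof.
rewrite /nu_comb; elim: r => [|c r IH]; first by rewrite big_nil mem0v.
rewrite big_cons /=; apply: rpredD.
  by apply: rpredZ; apply: memv_span; exact: mem_head.
by apply: (subvP (sub_span _) _ IH) => x hx; rewrite inE hx orbT.
Qed.

Lemma span_list (X : seq A) : exists S : seq (qpath n Arr),
  all (path_valid s t) S /\ {subset X <= <<map nu S>>%VS}.
Proof.
elim: X => [|x X [S [vS sS]]]; first by exists [::].
have [r [ro ->]] := surj x.
exists (map snd r ++ S); split.
  rewrite all_cat vS andbT; case/andP: ro => ro _.
  by rewrite all_map; apply: sub_all ro => c.
move=> y; rewrite inE => /orP[/eqP ->|hy].
  by apply: (subvP (sub_span _) _ (comb_span r)) => z hz; rewrite map_cat mem_cat hz.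
by apply: (subvP (sub_span _) _ (sS _ hy)) => z hz; rewrite map_cat mem_cat hz orbT.
Qed.
End Final.

Theorem proposition2p4
  (k : closedFieldType) (A : falgType k)
  (n : nat) (Arr : finType) (s t : Arr -> 'I_n)
  (e : 'I_n -> A) (a : Arr -> A)
  (x0 : 'I_n) (T : {set Arr}) (gamma : 'I_n -> seq (Arr * bool)) :
  acyclic_quiver s t ->
  presentation s t e a ->
  maximal_tree s t x0 T ->
  tree_walks s t x0 T gamma ->
  exists B : seq A, adapted_basis e B /\
    forall f : seq (Arr * bool) -> k, pi1_hom s t e a x0 f ->
    forall tf : A -> A, is_linear_map tf -> tilde_of s t e a gamma f tf ->
    exists D : A -> A, [/\ der0 e D, diagonal_wrt B D &
                          int0 e (fun x => tf x - D x)].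
Proof.
move=> _ [[eO esum ea] surj [N N2 hN] hker] _ htw.
have hg : forall x, wvalid s t x0 (gamma x) /\ wend s t x0 (gamma x) = x.
  by move=> x; case: (htw x).
have enz : forall i, e i != 0.
  move=> i; apply/eqP => ei.
  have := hker [:: (1, (i, [::]))] erefl _ (1, (i, [::])) (mem_head _ _) erefl.
  rewrite /nu_comb big_cons big_nil scale1r addr0 /nu_path /= ei => /(_ erefl) /eqP.
  by rewrite oner_eq0.
have [S [vS sS]] := span_list surj (vbasis (fullv : {vspace A})).
have [B [fB sXB sBX sYB]] := greedy (map (nu_path e a) S) (free_e eO enz (enum_uniq 'I_n)).
have Bform : forall b, b \in B -> exists2 p, path_valid s t p & b = nu_path e a p.
  move=> b /sBX; rewrite mem_cat => /orP[/mapP[i _ ->]|/mapP[p hp ->]].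
  - by exists (i, [::]).
  - by exists p => //; exact: (allP vS).
exists B; split.
  split.
  - rewrite /basis_of fB andbT eqEsubv subvf /=.
    have /andP[/eqP hV _] := vbasisP (fullv : {vspace A}).
    rewrite -{1}hV; apply/span_subvP => x /sS hx.
    have SB : (<<map (nu_path e a) S>> <= <<B>>)%VS by apply/span_subvP => y hy; exact: sYB.
    exact: (subvP SB).
  - move=> b /Bform [p pv ->]; exists (path_src p), (path_tgt t p).
    by rewrite (nu_l eO ea pv) (nu_r a eO).
  - by move=> i; apply: sXB; apply: map_f; exact: mem_enum.
  - move=> b hb hne; have [[x w] pv E] := Bform b hb.
    case: w pv E => [|c w] pv E.
      by have := hne x; rewrite E /nu_path /= eqxx.
    by rewrite E; apply: (rad_path eO ea hN surj).
move=> f hf tf tfl tft; exists tf; split.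
- split => //.
  + move=> x y; have [r [ro ->]] := surj x; have [r' [ro' ->]] := surj y.
    apply: (Pd_l tfl) => c hc; apply: (Pd_r tfl) => c' hc'.
    apply: (Pd_gen eO ea hf hg tfl tft).
    + exact: (allP (comb_valid ro)).
    + exact: (allP (comb_valid ro')).
  + move=> i; have := tft (i, [::]) erefl; rewrite /nu_path /= => ->.
    by rewrite (f_loop hf hg) scale0r.
- move=> b /Bform [p pv ->]; rewrite tft //; eexists; reflexivity.
- exists (fun _ => 0); cbv zeta => x.
  rewrite big1; last by move=> i _; exact: scale0r.
  by rewrite !subrr mul0r mulr0 subrr.
Qed.
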